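(* For every prime $p$ there exists a linear $(p-2,p,p)$-AONT over $\mathbb{F}_p$, i.e. an invertible $p\times p$ matrix over $\mathbb{F}_p$ all of whose $(p-2)\times(p-2)$ submatrices are invertible.
   Context: A linear $(t,s,q)$-AONT over $\mathbb{F}_q$ is given by an invertible $s\times s$ matrix $M$ over $\mathbb{F}_q$ (transform $(y_1,\dots,y_s)=(x_1,\dots,x_s)M^{-1}$); $M$ defines a linear $(t,s,q)$-AONT iff every $t\times t$ submatrix of $M$ is invertible (a $0\times 0$ submatrix counts as invertible). *)

(* Defs.v *)
From HB Require Import structures.
From mathcomp Require Import all_boot all_order all_algebra all_fingroup.
Set Implicit Arguments. Unset Strict Implicit. Unset Printing Implicit Defensive.
Import GRing.Theory.
Local Open Scope ring_scope.

Definition submx_sets (F : fieldType) (s t : nat) (M : 'M[F]_s)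
  (R C : {set 'I_s}) (hR : #|R| = t) (hC : #|C| = t) : 'M[F]_t :=
  \matrix_(i < t, j < t)
    M (enum_val (cast_ord (esym hR) i)) (enum_val (cast_ord (esym hC) j)).

Definition linear_AONT (F : fieldType) (t s : nat) (M : 'M[F]_s) : Prop :=
  M \in unitmx /\
  forall (R C : {set 'I_s}) (hR : #|R| = t) (hC : #|C| = t),
    submx_sets M hR hC \in unitmx.

(* Main.v *)
Require Import Defs.
From HB Require Import structures.
From mathcomp Require Import all_boot all_order all_algebra all_fingroup all_field.
From mathcomp Require Import zify ring.
Set Implicit Arguments. Unset Strict Implicit. Unset Printing Implicit Defensive.
Import GRing.Theory.
Local Open Scope ring_scope.

Definition phi (p : nat) (i : 'I_p) : 'F_p := (i : nat)%:R.

Lemma phi_inj p (hp : prime p) : injective (@phi p).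
Proof.
move=> i j; rewrite /phi => /(congr1 (@nat_of_ord _)); rewrite !val_Fp_nat // !modn_small //.
exact: ord_inj.
Qed.

Lemma phi_eq0 p (hp : prime p) (i : 'I_p) : (phi i == 0) = ((i : nat) == 0%N).
Proof.
rewrite /phi -(dvdn_pcharf (pchar_Fp hp)).
apply/idP/idP => [/dvdn_leq|/eqP ->]; last exact: dvdn0.
case: (i : nat) (ltn_ord i) => // n ltn /(_ isT); lia.
Qed.

Definition Amx p : 'M['F_p]_p :=
  \matrix_(a, b) if (b : nat) == 0%N then ((a : nat) != 0%N)%:R
                 else (phi a - phi b)^-1.

Lemma L1 (F : fieldType) (x y z w : F) : x != y -> z != w ->
  (x - z)^-1 * (y - w)^-1 != (x - w)^-1 * (y - z)^-1.
Proof.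
move=> xy zw.
have nz (a b : F) : a != b -> (a - b)^-1 != 0 by rewrite invr_eq0 subr_eq0.
case: (eqVneq x z) => [e|xz].
  subst z; rewrite subrr invr0 mul0r eq_sym; apply: mulf_neq0; apply: nz => //.
  by rewrite eq_sym.
case: (eqVneq y w) => [e|yw].
  subst w; rewrite subrr invr0 mulr0 eq_sym; apply: mulf_neq0; apply: nz => //.
  by rewrite eq_sym.
case: (eqVneq x w) => [e|xw].
  subst w; rewrite subrr invr0 mul0r; apply: mulf_neq0; apply: nz => //.
case: (eqVneq y z) => [e|yz].
  subst z; rewrite subrr invr0 mulr0; apply: mulf_neq0; apply: nz => //.
apply/eqP => h.
have : (x - w) * (y - z) = (x - z) * (y - w).
  by move: h; rewrite -!invfM => /invr_inj.
move/eqP; rewrite -subr_eq0.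
have -> : (x - w) * (y - z) - (x - z) * (y - w) = (y - x) * (z - w) by ring.
by rewrite mulf_eq0 !subr_eq0 eq_sym (negbTE xy) (negbTE zw).
Qed.

Lemma L2 (F : fieldType) (x y w : F) : x != y -> w != 0 ->
  (x != 0)%:R * (y - w)^-1 != (x - w)^-1 * (y != 0)%:R.
Proof.
move=> xy w0.
have nw : (0 - w)^-1 != 0 by rewrite invr_eq0 sub0r oppr_eq0.
case: (eqVneq x 0) => [e|x0].
  subst x; rewrite eq_sym in xy; rewrite xy mul0r mulr1 eq_sym //.
case: (eqVneq y 0) => [e|y0].
  by subst y; rewrite mulr0 mul1r.
rewrite mul1r mulr1; apply/eqP => /invr_inj /addIr e.
by rewrite e eqxx in xy.
Qed.

Lemma A22 p (hp : prime p) (l1 l2 k1 k2 : 'I_p) : l1 != l2 -> k1 != k2 ->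
  Amx p l1 k1 * Amx p l2 k2 != Amx p l1 k2 * Amx p l2 k1.
Proof.
move=> hl hk; rewrite !mxE.
have ph (l : 'I_p) : ((l : nat) != 0%N) = (phi l != 0) by rewrite phi_eq0.
have hl' : phi l1 != phi l2 by rewrite (inj_eq (phi_inj hp)).
case: (boolP ((k1 : nat) == 0%N)) => h1; case: (boolP ((k2 : nat) == 0%N)) => h2.
- by move: hk; rewrite -(inj_eq val_inj) /= (eqP h1) (eqP h2).
- rewrite !ph; apply: L2 => //; by rewrite phi_eq0.
- rewrite !ph mulrC [X in _ != X]mulrC.
  apply: L2; first by rewrite eq_sym.
  by rewrite phi_eq0.
- by apply: L1 => //; rewrite (inj_eq (phi_inj hp)).
Qed.

Lemma A_unit p (hp : prime p) (p3 : (2 < p)%N) : Amx p \in unitmx.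
Proof.
rewrite unitmxE unitfE; apply/negP => /det0P [u u0 uA].
have p0 : (0 < p)%N by apply: prime_gt0.
pose o : 'I_p := Ordinal p0.
have hcol b : \sum_a u 0 a * Amx p a b = 0.
  by have := congr1 (fun X : 'rV['F_p]_p => X 0 b) uA; rewrite mxE [RHS]mxE.
have ferm (z : 'F_p) : z != 0 -> z ^+ p.-1 = 1.
  move=> z0; apply: (mulfI z0); rewrite mulr1 -exprS prednK //.
  by have := expf_card z; rewrite card_Fp.
have inv_exp (z : 'F_p) : z ^+ p.-2 = z^-1.
  case: (eqVneq z 0) => [->|z0]; first by rewrite invr0 expr0n (_ : (p.-2 == 0%N) = false) //; lia.
  apply: (mulfI z0); rewrite divff // -exprS.
  by rewrite (_ : p.-2.+1 = p.-1) ?ferm //; lia.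
have pm1 : (p.-1)%:R = -1 :> 'F_p.
  have : (p.-1.+1)%:R = 0 :> 'F_p by rewrite prednK // pchar_Fp_0.
  by rewrite mulrSr => /eqP; rewrite addr_eq0 => /eqP.
pose P := \sum_(a < p) u 0 a *: (1 - ('X - (phi a)%:P) ^+ p.-1).
have Pev c : P.[phi c] = u 0 c.
  rewrite horner_sum (bigD1 c) //= big1 ?addr0.
    by rewrite !hornerE subrr expr0n /= (_ : p.-1 == 0%N = false) ?subr0 ?mulr1 //; lia.
  move=> a ac; rewrite !hornerE ferm ?subrr ?mulr0 //.
  by rewrite subr_eq0 (inj_eq (phi_inj hp)) eq_sym.
have dterm (c x : 'F_p) : ((1 - ('X - c%:P) ^+ p.-1)^`()).[x] = (x - c)^-1.
  rewrite derivB -polyC1 derivC deriv_exp derivXsubC mul1r sub0r.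
  by rewrite hornerN hornerMn !hornerE -mulr_natr pm1 mulrN1 opprK inv_exp.
have Pd (b : 'I_p) : (b : nat) != 0%N -> P^`().[phi b] = 0.
  move=> b0; rewrite linear_sum horner_sum -[RHS]oppr0 -[in RHS](hcol b) -sumrN.
  apply: eq_bigr => a _; rewrite linearZ /= hornerZ dterm mxE (negbTE b0).
  by rewrite -mulrN -invrN opprB.
have sizeP : (size P <= p)%N.
  apply: (leq_trans (size_sum _ _ _)); apply/bigmax_leqP => a _.
  apply: (leq_trans (size_scale_leq _ _)).
  apply: (leq_trans (size_add _ _)); rewrite size_poly1 size_opp size_exp_XsubC.
  rewrite geq_max; apply/andP; split; lia.
have Pd0 : P^`() = 0.
  apply/eqP; apply: contraT => nz.
  pose rs := [seq phi b | b <- enum (predC1 o)].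
  have hr : all (root P^`()) rs.
    apply/allP => x /mapP [b]; rewrite mem_enum /= => bo ->.
    apply/eqP; apply: Pd; apply: contra bo => /eqP b0.
    by apply/eqP; apply: val_inj.
  have ur : uniq rs by rewrite map_inj_uniq ?enum_uniq //; apply: phi_inj.
  have := max_poly_roots nz hr ur.
  rewrite size_map -cardE cardC1 card_ord => h1.
  have P0 : P != 0 by apply: contraNneq nz => ->; rewrite deriv0.
  have h3 := leq_trans (lt_size_deriv P0) sizeP.
  have h4 := leq_ltn_trans h1 h3.
  by rewrite prednK // ltnn in h4.
have Pcoef (i : nat) : (0 < i < p)%N -> P`_i = 0.
  move=> /andP [i0 ip].
  have := congr1 (fun q : {poly 'F_p} => q`_i.-1) Pd0.
  rewrite /= coef_deriv coef0 prednK // -mulr_natr => /eqP.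
  rewrite mulf_eq0 => /orP [/eqP //|].
  have := phi_eq0 hp (Ordinal ip); rewrite /phi /= => -> /eqP; lia.
have Pc : P = (P`_0)%:P.
  apply/polyP => i; rewrite coefC; case: i => [//|i] /=.
  case: (ltnP i.+1 p) => hi; first by apply: Pcoef.
  by rewrite nth_default //; apply: leq_trans hi.
have uc c : u 0 c = P`_0 by rewrite -Pev {1}Pc hornerC.
have hs : \sum_a u 0 a * Amx p a o = P`_0 * (p.-1)%:R.
  rewrite (bigD1 o) //= mxE /= mulr0 add0r.
  have e : forall a : 'I_p, a != o -> u 0 a * Amx p a o = P`_0.
    move=> a ao; rewrite mxE /= uc (_ : (a : nat) != 0%N) ?mulr1 //.
  rewrite (eq_bigr _ e).
  by rewrite sumr_const cardC1 card_ord mulr_natr.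
move: (hcol o); rewrite hs pm1 mulrN1 => /eqP; rewrite oppr_eq0 => /eqP h0.
move/eqP: u0; apply; apply/rowP => c; rewrite uc h0 mxE //.
Qed.
Lemma compl (F : fieldType) (s t : nat) (M N : 'M[F]_s) :
  M *m N = 1%:M ->
  (forall l1 l2 k1 k2 : 'I_s, l1 != l2 -> k1 != k2 ->
      N l1 k1 * N l2 k2 != N l1 k2 * N l2 k1) ->
  (t + 2 = s)%N ->
  forall (R C : {set 'I_s}) (hR : #|R| = t) (hC : #|C| = t), submx_sets M hR hC \in unitmx.
Proof.
move=> MN hN hts R C hR hC.
rewrite unitmxE unitfE; apply/negP => /det0P [v v0 vS].
pose r := fun i : 'I_t => enum_val (cast_ord (esym hR) i).
have rR i : r i \in R by apply: enum_valP.
have r_inj : injective r.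
  by move=> i j /enum_val_inj /cast_ord_inj.
pose E : 'M[F]_(t, s) := \matrix_(i, k) (r i == k)%:R.
pose u := v *m E. pose w := u *m M.
have uE k : u 0 k = \sum_i v 0 i * (r i == k)%:R.
  by rewrite !mxE; apply: eq_bigr => i _; rewrite mxE.
have u_out k : k \notin R -> u 0 k = 0.
  move=> kR; rewrite uE big1 // => i _.
  rewrite (_ : (r i == k) = false) ?mulr0 //.
  by apply: contraNF kR => /eqP <-.
have u_r i : u 0 (r i) = v 0 i.
  rewrite uE (bigD1 i) //= eqxx mulr1 big1 ?addr0 // => j ji.
  by rewrite (inj_eq r_inj) (negbTE ji) mulr0.
have u0 : u != 0.
  by move: v0; apply: contra_neq => uz; apply/rowP => i; rewrite -u_r uz !mxE.
have w_C c : c \in C -> w 0 c = 0.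
  move=> cC.
  pose j := cast_ord hC (enum_rank_in cC c).
  have cj : c = enum_val (cast_ord (esym hC) j).
    by rewrite /j cast_ordK enum_rankK_in.
  have hv : \sum_i v 0 i * submx_sets M hR hC i j = 0.
    by have := congr1 (fun X : 'rV[F]_t => X 0 j) vS; rewrite mxE [RHS]mxE.
  rewrite -hv.
  rewrite /w /u -mulmxA mxE; apply: eq_bigr => i _.
  rewrite mxE; congr (_ * _).
  rewrite (bigD1 (r i)) //= mxE eqxx mul1r big1 ?addr0; last first.
    by move=> k ki; rewrite mxE eq_sym (negbTE ki) mul0r.
  by rewrite /submx_sets mxE -cj.
have wN : w *m N = u by rewrite -mulmxA MN mulmx1.
clearbody w.
have w0 : w != 0 by move: u0; apply: contra_neq => wz; rewrite -wN wz mul0mx.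
have c2 (A : {set 'I_s}) : #|A| = t -> #|~: A| == 2%N.
  move=> hA; have := cardsC A; rewrite card_ord hA => h.
  by apply/eqP; lia.
case/cards2P: (c2 C hC) => l1 [l2 [l12 eC]].
case/cards2P: (c2 R hR) => k1 [k2 [k12 eR]].
have wl l : l != l1 -> l != l2 -> w 0 l = 0.
  move=> h1 h2; apply: w_C.
  have : l \notin ~: C by rewrite eC !inE negb_or h1 h2.
  by rewrite inE negbK.
have eqk k : k \in ~: R -> w 0 l1 * N l1 k + w 0 l2 * N l2 k = 0.
  move=> kR; rewrite inE in kR; rewrite -(u_out k kR) -wN mxE.
  rewrite (bigD1 l1) //= (bigD1 l2) /=; last by rewrite eq_sym.
  rewrite big1 ?addr0 // => l /andP [h1 h2].
  by rewrite wl ?mul0r.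
have e1 := eqk k1; have e2 := eqk k2.
rewrite eR !inE eqxx /= in e1 e2.
move: (e1 isT) (e2 ltac:(by rewrite eqxx orbT)) => {e1 e2} e1 e2.
have hD := hN l1 l2 k1 k2 l12 k12.
set a := w 0 l1 in e1 e2; set b := w 0 l2 in e1 e2.
have ha : a * (N l1 k1 * N l2 k2 - N l1 k2 * N l2 k1) = 0.
  have -> : a * (N l1 k1 * N l2 k2 - N l1 k2 * N l2 k1) =
     N l2 k2 * (a * N l1 k1 + b * N l2 k1) - N l2 k1 * (a * N l1 k2 + b * N l2 k2).
    by ring.
  by rewrite e1 e2 !mulr0 subr0.
have hb : b * (N l1 k1 * N l2 k2 - N l1 k2 * N l2 k1) = 0.
  have -> : b * (N l1 k1 * N l2 k2 - N l1 k2 * N l2 k1) =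
     N l1 k1 * (a * N l1 k2 + b * N l2 k2) - N l1 k2 * (a * N l1 k1 + b * N l2 k1).
    by ring.
  by rewrite e1 e2 !mulr0 subr0.
have nz : N l1 k1 * N l2 k2 - N l1 k2 * N l2 k1 != 0 by rewrite subr_eq0.
move/eqP: ha; rewrite mulf_eq0 (negbTE nz) orbF => /eqP ha.
move/eqP: hb; rewrite mulf_eq0 (negbTE nz) orbF => /eqP hb.
move/eqP: w0; apply; apply/rowP => l; rewrite mxE.
case: (eqVneq l l1) => [->//|h1]; case: (eqVneq l l2) => [->//|h2].
exact: wl.
Qed.

Local Close Scope ring_scope.

Theorem corollary2p26 (p : nat) (hp : prime p) :
  exists M : 'M['F_p]_p, linear_AONT (p - 2) M.
Proof.
case: (ltnP 2 p) => p3; last first.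
  have gen : forall n, n = 0%N -> forall A : 'M['F_p]_n, A \in unitmx.
    by move=> n -> A; rewrite unitmxE det_mx00 unitr1.
  exists (1%:M)%R; split; first exact: unitmx1.
  move=> R C hR hC; apply: gen; lia.
exists (invmx (Amx p)); split; first by rewrite unitmx_inv A_unit.
move=> R C hR hC.
have hts : (p - 2 + 2 = p)%N by have := prime_gt1 hp; lia.
exact: (compl (mulVmx (A_unit hp p3)) (@A22 p hp) hts hR hC).
Qed.
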